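(* Consider the constraint system obtained from (ILP-1) by replacing, in the flow constraints, the one-to-many flows indexed by $b\in\texttt{src}$ with many-to-one flows indexed by $b\in\texttt{snk}$: for all $b\in\texttt{snk}$, $s\in S$, $t$: $F^b_{st}=-\sum_{r\in\texttt{src}}z_{rs0}$ if $t=0$, $F^b_{st}=|\texttt{src}|\,z_{bsT}$ if $t=T$, and $F^b_{st}=0$ otherwise (with the bridge constraints now imposed for $b\in\texttt{snk}$). For any feasible point of this system, defining $s^r_t$ as the unique state with $z_{rs^r_tt}=1$ and $\pi^r=s^r_0\cdots s^r_T$, the $\pi^r$ are mobility paths and for every $i\in\texttt{src}$ and $j\in\texttt{snk}$ there exists an agent-to-agent information path $\bar\pi^{i,j}$ valid with respect to $\{\pi^r\}$.
   Context: A mobility-communication network is $\mathcal N=(S,\rightarrow,\rightsquigarrow)$ with $S$ finite, $\rightarrow\subseteq S\times S$ directed mobility edges, $\rightsquigarrow\subseteq S\times S$ directed communication edges; $C^\mp_\rightarrow(s)$, $C^\mp_\rightsquigarrow(s)$ denote predecessor/successor sets along the respective edges. There are $R$ agents with initial states $s^r_0$, horizon $T\ge1$, and $\texttt{src},\texttt{snk}\subseteq\{1,\dots,R\}$. A mobility path is $s_0\cdots s_T$ with $(s_t,s_{t+1})\in\rightarrow$. An information path is $\mathfrak s^0_0\cdots\mathfrak s^{n_0}_0\mathfrak s^0_1\cdots\mathfrak s^{n_T}_T$ with $(\mathfrak s^i_t,\mathfrak s^{i+1}_t)\in\rightsquigarrow$ for $i<n_t$ and $(\mathfrak s^{n_t}_t,\mathfrak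 s^0_{t+1})\in\rightarrow$ for $t<T$; an agent-to-agent information path $\bar\pi^{i,j}$ starts at $s^i_0$ and ends at $s^j_T$. It is valid w.r.t. mobility paths $\{\pi^r=s^r_0\cdots s^r_T\}$ if $\{\mathfrak s^i_t\}_{i\le n_t}\subseteq\{s^r_t\}_r$ for all $t$ and $(\mathfrak s^{n_t}_t,\mathfrak s^0_{t+1})\in\{(s^r_t,s^r_{t+1})\}_r$ for all $t<T$. Variables: binary $z_{rst}$ ($0\le t\le T$), $x_{rss't}$ ($(s,s')\in\rightarrow$, $t<T$); nonnegative integer $f^b_{ss't}$ ($(s,s')\in\rightarrow$, $t<T$), $\bar f^b_{ss't}$ ($(s,s')\in\rightsquigarrow$, $t\le T$). $F^b_{st}=\sum_{s'\in C^-_\rightarrow(s)}f^b_{s's(t-1)}+\sum_{s'\in C^-_\rightsquigarrow(s)}\bar f^b_{s'st}-\sum_{s'\in C^+_\rightarrow(s)}f^b_{ss't}-\sum_{s'\in C^+_\rightsquigarrow(s)}\bar f^b_{ss't}$ (terms with time $-1$ or mobility time $T$ omitted). With a constant $N\ge R$, the remaining constraints are: $z_{rs0}=1$ iff $s=s^r_0$; $z_{rs(t+1)}=\sum_{s'\in C^-_\rightarrow(s)}x_{rs'st}$ and $z_{rst}=\sum_{s'\in C^+_\rightarrow(s)}x_{rss't}$ for $t<T$; $\bar f^b_{ss't}\le N\sum_rz_{rst}$, $\bar f^b_{ss't}\le N\sum_rz_{rs't}$, $f^b_{ss't}\le N\sum_rx_{rss't}$ for every flow index $b$. *)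

(* Defs.v *)
From HB Require Import structures.
From mathcomp Require Import all_boot all_order all_algebra.
Set Implicit Arguments. Unset Strict Implicit. Unset Printing Implicit Defensive.
Import GRing.Theory Num.Theory.

(* Net flow F^b_{st} for one flow index b, given the mobility-edge flows
   f s s' t (meaningful for (s,s') mobility edge, t < T) and the
   communication-edge flows fb s s' t (meaningful for (s,s') comm edge, t <= T).
   Terms with time -1 or mobility time T are omitted. *)
Definition netflow (S : finType) (mob comm : rel S) (T : nat)
    (f fb : S -> S -> nat -> nat) (s : S) (t : nat) : int :=
  ((if (0 < t)%N then \sum_(s' | mob s' s) (f s' s t.-1)%:Z else 0)
   + \sum_(s' | comm s' s) (fb s' s t)%:Z
   - (if (t < T)%N then \sum_(s' | mob s s') (f s s' t)%:Z else 0)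
   - \sum_(s' | comm s s') (fb s s' t)%:Z)%R.

Definition mobility_path (S : finType) (mob : rel S) (T : nat) (pi : nat -> S) :=
  forall t, (t < T)%N -> mob (pi t) (pi t.+1).

(* An information path: for each t <= T a nonempty segment
   a t :: l t = s^0_t ... s^{n_t}_t, consecutive states along comm edges,
   and (s^{n_t}_t, s^0_{t+1}) a mobility edge for t < T. *)
Definition info_path (S : finType) (mob comm : rel S) (T : nat)
    (a : nat -> S) (l : nat -> seq S) :=
  (forall t, (t <= T)%N -> path comm (a t) (l t)) /\
  (forall t, (t < T)%N -> mob (last (a t) (l t)) (a t.+1)).

Definition agent_info_path (S : finType) (mob comm : rel S) (T R : nat)
    (pi : 'I_R -> nat -> S) (i j : 'I_R) (a : nat -> S) (l : nat -> seq S) :=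
  info_path mob comm T a l /\ a 0%N = pi i 0%N /\ last (a T) (l T) = pi j T.

Definition valid_info_path (S : finType) (T R : nat) (pi : 'I_R -> nat -> S)
    (a : nat -> S) (l : nat -> seq S) :=
  (forall t, (t <= T)%N -> forall s, s \in a t :: l t -> exists r, s = pi r t) /\
  (forall t, (t < T)%N -> exists r,
      last (a t) (l t) = pi r t /\ a t.+1 = pi r t.+1).

(* Main.v *)
Require Import Defs.
From HB Require Import structures.
From mathcomp Require Import all_boot all_order all_algebra.
Import GRing.Theory Num.Theory.
From Stdlib Require Import ClassicalEpsilon.
From mathcomp Require Import zify ring lra.
Set Implicit Arguments. Unset Strict Implicit.

Definition pb (P : Prop) : bool := if excluded_middle_informative P then true else false.
Lemma pbP (P : Prop) : reflect P (pb P).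
Proof. rewrite /pb; case: excluded_middle_informative => H; by constructor. Qed.

Definition reach (S : finType) (mob comm : rel S) (R : nat) (pi : 'I_R -> nat -> S)
  (i : 'I_R) (s : S) (t : nat) : Prop :=
 exists (a : nat -> S) (l : nat -> seq S),
  (forall u, (u <= t)%N -> path comm (a u) (l u)) /\
  (forall u, (u < t)%N -> mob (last (a u) (l u)) (a u.+1)) /\
  a 0%N = pi i 0%N /\ last (a t) (l t) = s /\
  (forall u, (u <= t)%N -> forall s, s \in a u :: l u -> exists r, s = pi r u) /\
  (forall u, (u < t)%N -> exists r, last (a u) (l u) = pi r u /\ a u.+1 = pi r u.+1).

Lemma reach0 (S : finType) (mob comm : rel S) (R : nat) (pi : 'I_R -> nat -> S) i :
  reach mob comm pi i (pi i 0%N) 0%N.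
Proof.
exists (fun _ => pi i 0%N), (fun _ => [::]); split; first by [].
split; first by [].
split; first by [].
split; first by [].
split; last by [].
move=> u; rewrite leqn0 => /eqP -> s; rewrite inE => /eqP ->; by exists i.
Qed.

Lemma reach_comm (S : finType) (mob comm : rel S) (R : nat) (pi : 'I_R -> nat -> S) i s s' t :
  reach mob comm pi i s t -> comm s s' -> (exists r, s' = pi r t) ->
  reach mob comm pi i s' t.
Proof.
move=> [a [l [Hp [Hm [H0 [Hl [Hv Hv']]]]]]] Hc Ho.
exists a, (fun u => if u == t then rcons (l t) s' else l u); split.
  move=> u Hu; case: eqP => [->|_]; last exact: Hp.
  by rewrite rcons_path Hp //=; move: Hc; rewrite -Hl.
split.
  move=> u Hu; rewrite ifN; first exact: Hm.
  by rewrite neq_ltn Hu.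
split; first by [].
split; first by rewrite eqxx last_rcons.
split.
  move=> u Hu x; case: eqP => [->|_]; last exact: Hv.
  rewrite in_cons mem_rcons in_cons orbCA => /orP [/eqP ->//|Hx].
  by apply: (Hv t (leqnn t)); rewrite in_cons.
move=> u Hu; rewrite ifN; first exact: Hv'.
by rewrite neq_ltn Hu.
Qed.

Lemma reach_mob (S : finType) (mob comm : rel S) (R : nat) (pi : 'I_R -> nat -> S) i s s' t :
  reach mob comm pi i s t -> mob s s' -> (exists r, s = pi r t /\ s' = pi r t.+1) ->
  reach mob comm pi i s' t.+1.
Proof.
move=> [a [l [Hp [Hm [H0 [Hl [Hv Hv']]]]]]] Hmb [r [Hr1 Hr2]].
exists (fun u => if u == t.+1 then s' else a u),
       (fun u => if u == t.+1 then [::] else l u); split.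
  move=> u Hu; case: eqP => [//|/eqP Hne]; apply: Hp; lia.
split.
  move=> u Hu; have -> : (u == t.+1) = false by lia.
  case: (eqVneq u t) => [->|Hne]; first by rewrite eqxx Hl.
  have -> : (u.+1 == t.+1) = false by lia. apply: Hm; lia.
split; first by [].
split; first by rewrite eqxx.
split.
  move=> u Hu x; case: eqP => [-> | /eqP Hne].
    by rewrite inE => /eqP ->; exists r.
  apply: Hv; lia.
move=> u Hu; have -> : (u == t.+1) = false by lia.
case: (eqVneq u t) => [->|Hne]; first by rewrite eqxx Hl; exists r.
have -> : (u.+1 == t.+1) = false by lia. apply: Hv'; lia.
Qed.

Open Scope ring_scope.
Lemma cut_lemma (S : finType) (E : rel S) (g : S -> S -> int) (I0 I1 : S -> int) :
  (forall a b, E a b -> 0 <= (I1 b - I0 a) * g a b) ->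
  0 <= \sum_s I1 s * (\sum_(s' | E s' s) g s' s) - \sum_s I0 s * (\sum_(s' | E s s') g s s').
Proof.
move=> H.
under eq_bigr do rewrite mulr_sumr.
under [X in _ - X]eq_bigr do rewrite mulr_sumr.
rewrite [X in _ - X](exchange_big_dep xpredT) //=.
rewrite -sumrB; apply: sumr_ge0 => s _.
rewrite -sumrB; apply: sumr_ge0 => s' Hs.
by rewrite -mulrBl; apply: H.
Qed.

Close Scope ring_scope.
Unset Implicit Arguments. Set Strict Implicit.

Theorem mainTheorem3 (S : finType) (mob comm : rel S) (R : nat)
  (s0 : 'I_R -> S) (T : nat) (src snk : {set 'I_R}) (N : nat)
  (z : 'I_R -> S -> nat -> bool)
  (x : 'I_R -> S -> S -> nat -> bool)
  (f : 'I_R -> S -> S -> nat -> nat)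
  (fb : 'I_R -> S -> S -> nat -> nat) :
  (1 <= T)%N ->
  (R <= N)%N ->
  (* initial states *)
  (forall r s, z r s 0%N = (s == s0 r)) ->
  (* mobility consistency *)
  (forall r s t, (t < T)%N ->
     (z r s t.+1 : nat) = \sum_(s' | mob s' s) (x r s' s t : nat)) ->
  (forall r s t, (t < T)%N ->
     (z r s t : nat) = \sum_(s' | mob s s') (x r s s' t : nat)) ->
  (* bridge constraints, b in snk *)
  (forall b, b \in snk -> forall s s' t, comm s s' -> (t <= T)%N ->
     (fb b s s' t <= N * \sum_r (z r s t : nat))%N) ->
  (forall b, b \in snk -> forall s s' t, comm s s' -> (t <= T)%N ->
     (fb b s s' t <= N * \sum_r (z r s' t : nat))%N) ->
  (forall b, b \in snk -> forall s s' t, mob s s' -> (t < T)%N ->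
     (f b s s' t <= N * \sum_r (x r s s' t : nat))%N) ->
  (* many-to-one flow constraints, b in snk *)
  (forall b, b \in snk -> forall s t, (t <= T)%N ->
     netflow mob comm T (f b) (fb b) s t =
       (if t == 0%N then - (\sum_(r in src) (z r s 0%N : nat))%:Z
        else if t == T then (#|src| * z b s T)%:Z
        else 0)%R) ->
  exists pi : 'I_R -> nat -> S,
    (forall r t, (t <= T)%N -> forall s, z r s t = (s == pi r t)) /\
    (forall r, mobility_path mob T (pi r)) /\
    (forall i j, i \in src -> j \in snk ->
       exists (a : nat -> S) (l : nat -> seq S),
         agent_info_path mob comm T pi i j a l /\ valid_info_path T pi a l).
Proof.
Open Scope ring_scope.
move=> T1 RN z0 zin zout brs brd brm flow.
have sum_eq1 : forall r t, (t <= T)%N -> (\sum_s (z r s t : nat) = 1)%N.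
  move=> r; elim=> [|t IH] Ht.
    rewrite (bigD1 (s0 r)) //= z0 eqxx big1 // => s; rewrite z0.
    by move/negbTE => ->.
  rewrite (eq_bigr (fun s => \sum_(s' | mob s' s) (x r s' s t : nat))); last first.
    by move=> s _; rewrite zin.
  rewrite (exchange_big_dep xpredT) //=.
  rewrite -[RHS](IH (ltnW Ht)); apply: eq_bigr => s' _; rewrite zout //.
pose pi r t := odflt (s0 r) [pick s | z r s t].
have zpi : forall r t, (t <= T)%N -> forall s, z r s t = (s == pi r t).
  move=> r t Ht s; rewrite /pi; case: pickP => [s1 Hs1|H0] /=.
    apply/idP/eqP => [Hs|->//]; apply/eqP/negPn/negP => neq.
    have := sum_eq1 r t Ht; rewrite (bigD1 s1) //= (bigD1 s) /= ?neq //.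
    rewrite Hs1 Hs /=; lia.
  have := sum_eq1 r t Ht; rewrite big1 // => s2 _; by rewrite H0.
have xpi : forall r s s' t, (t < T)%N -> mob s s' -> x r s s' t ->
    s = pi r t /\ s' = pi r t.+1.
  move=> r s s' t Ht Hm Hx.
  have h1 : (0 < z r s t)%N.
    rewrite zout // (bigD1 s') //= Hx /=; lia.
  have h2 : (0 < z r s' t.+1)%N.
    rewrite zin // (bigD1 s) //= Hx /=; lia.
  rewrite lt0b in h1; rewrite lt0b in h2.
  by split; apply/eqP; rewrite -zpi // ltnW.
have mobp : forall r, mobility_path mob T (pi r).
  move=> r t Ht.
  have hz : z r (pi r t) t by rewrite zpi ?eqxx // ltnW.
  case: (pickP (fun s' => mob (pi r t) s' && x r (pi r t) s' t)) => [s' /andP[Hm Hx] | Hn].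
    by have [_ <-] := xpi _ _ _ _ Ht Hm Hx.
  move: hz; rewrite -(lt0b (z r (pi r t) t)) zout // big1 // => s' Hm.
  by have := Hn s'; rewrite Hm /= => ->.
have occ : forall s t, (t <= T)%N -> (0 < \sum_r (z r s t : nat))%N -> exists r, s = pi r t.
  move=> s t Ht; case: (pickP (fun r => z r s t)) => [r Hr|Hn].
    by move=> _; exists r; apply/eqP; rewrite -zpi.
  move=> H; exfalso; move: H; rewrite big1 // => r _; by rewrite Hn.
exists pi; split; first exact: zpi.
split; first exact: mobp.
move=> i j Hi Hj.
have fbpos : forall s s' t, comm s s' -> (t <= T)%N -> (0 < fb j s s' t)%N ->
    exists r, s' = pi r t.
  move=> s s' t Hc Ht Hp; apply: occ => //.
  have : (0 < N * \sum_r (z r s' t : nat))%N by apply: leq_trans Hp (brd j Hj s s' t Hc Ht).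
  by rewrite muln_gt0 => /andP[_ ->].
have fpos : forall s s' t, mob s s' -> (t < T)%N -> (0 < f j s s' t)%N ->
    exists r, s = pi r t /\ s' = pi r t.+1.
  move=> s s' t Hm Ht Hp.
  have : (0 < N * \sum_r (x r s s' t : nat))%N by apply: leq_trans Hp (brm j Hj s s' t Hm Ht).
  rewrite muln_gt0 => /andP[_].
  case: (pickP (fun r => x r s s' t)) => [r Hr|Hn].
    by move=> _; exists r; apply: xpi.
  rewrite big1 ?ltnn // => r _; by rewrite Hn.
have Hreach : reach mob comm pi i (pi j T) T.
  case: (pbP (reach mob comm pi i (pi j T) T)) => [//|Hn]; exfalso.
  pose X s t := ((t <= T)%N && pb (reach mob comm pi i s t)).
  pose I s t : int := if X s t then 1 else 0.
  have Xcomm : forall s s' t, X s t -> comm s s' -> (0 < fb j s s' t)%N -> X s' t.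
    move=> s s' t /andP[Ht /pbP Hr] Hc Hp; apply/andP; split => //.
    by apply/pbP; apply: reach_comm Hr Hc (fbpos _ _ _ Hc Ht Hp).
  have Xmob : forall s s' t, X s t -> (t < T)%N -> mob s s' -> (0 < f j s s' t)%N -> X s' t.+1.
    move=> s s' t /andP[_ /pbP Hr] Ht Hm Hp; apply/andP; split => //.
    by apply/pbP; apply: reach_mob Hr Hm (fpos _ _ _ Hm Ht Hp).
  have X0 : X (pi i 0%N) 0%N by apply/andP; split => //; apply/pbP; apply: reach0.
  have XT : forall s, X s T -> z j s T = false.
    move=> s /andP[_ /pbP Hr]; apply/negbTE/negP => Hz.
    by apply: Hn; move: Hr; have := zpi j T (leqnn T) s; rewrite Hz => /esym/eqP <-.
  pose Tot := \sum_(0 <= t < T.+1) \sum_s I s t * netflow mob comm T (f j) (fb j) s t.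
  have upper : 0 <= Tot.
    have -> : Tot = \sum_(0 <= t < T.+1)
        (\sum_s I s t * (if (0 < t)%N then \sum_(s' | mob s' s) (f j s' s t.-1)%:Z else 0)
         - \sum_s I s t * (if (t < T)%N then \sum_(s' | mob s s') (f j s s' t)%:Z else 0))
      + \sum_(0 <= t < T.+1)
        (\sum_s I s t * (\sum_(s' | comm s' s) (fb j s' s t)%:Z)
         - \sum_s I s t * (\sum_(s' | comm s s') (fb j s s' t)%:Z)).
      rewrite -big_split; apply: eq_bigr => t _ /=.
      rewrite -!sumrB -big_split; apply: eq_bigr => s _ /=.
      rewrite /netflow; ring.
    apply: addr_ge0.
      rewrite sumrB big_nat_recl // big_nat_recr //=.
      rewrite big1 ?add0r; last by move=> s _; rewrite mulr0.
      rewrite [X in _ - (_ + X)]big1 ?addr0; last by move=> s _; rewrite ltnn mulr0.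
      rewrite -sumrB big_nat_cond; apply: sumr_ge0 => t /andP[/andP[_ Ht] _].
      rewrite Ht ?ltn0Sn /=.
      apply: (@cut_lemma _ mob (fun a b => (f j a b t)%:Z) (fun s => I s t) (fun s => I s t.+1)).
      move=> a b Hab; rewrite /I.
      case Xa: (X a t); case Xb: (X b t.+1); rewrite ?subrr ?mul0r ?subr0 ?mul1r //.
      case: (posnP (f j a b t)) => [->|Hp]; first by rewrite mulr0.
      by rewrite (Xmob _ _ _ Xa Ht Hab Hp) in Xb.
    apply: sumr_ge0 => t _.
    apply: (@cut_lemma _ comm (fun a b => (fb j a b t)%:Z) (fun s => I s t) (fun s => I s t)).
    move=> a b Hab; rewrite /I.
    case Xa: (X a t); case Xb: (X b t); rewrite ?subrr ?mul0r ?subr0 ?mul1r //.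
      case: (posnP (fb j a b t)) => [->|Hp]; first by rewrite mulr0.
      by rewrite (Xcomm _ _ _ Xa Hab Hp) in Xb.
  have lower : Tot <= -1.
    have -> : Tot = \sum_(0 <= t < T.+1) \sum_s I s t *
       (if t == 0%N then - (\sum_(r in src) (z r s 0%N : nat))%:Z
        else if t == T then (#|src| * z j s T)%:Z else 0).
      by apply: eq_big_nat => t /andP[_ Ht]; apply: eq_bigr => s _; rewrite flow.
    rewrite big_nat_recl //= [X in _ + X](_ : _ = 0) ?addr0; last first.
      rewrite big_nat_cond; apply: big1 => t /andP[/andP[_ Ht] _]; apply: big1 => s _ /=.
      case: eqP => [HT|_]; last by rewrite mulr0.
      rewrite /I; case Xs: (X s t.+1); last by rewrite mul0r.
      by rewrite HT in Xs; rewrite (XT _ Xs) muln0 mulr0.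
    rewrite (bigD1 (pi i 0%N)) //= /I X0.
    have hs : (1 <= \sum_(r in src) (z r (pi i 0%N) 0%N : nat))%N.
      by rewrite (bigD1 i) //= zpi // eqxx.
    set A := (X in _ + X <= _).
    have hr : A <= 0.
      apply: sumr_le0 => s _; case: (X s 0%N); rewrite ?mul1r ?mul0r //.
      by rewrite oppr_le0.
    rewrite mul1r. move: hs hr. set B := (\sum_(r in src) _)%N. move=> hs hr. lia.
  lia.
move: Hreach => [a [l [Hp [Hm [H0 [Hl [Hv Hv']]]]]]]; exists a, l.
split; first by split; [split; [exact: Hp | exact: Hm] | split; [exact: H0 | exact: Hl]].
by split; [exact: Hv | exact: Hv'].
Qed.
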